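(* Let $\sigma>0$, $p\in(0,1)$ and $\delta\in(0,1)$. Let $\pi_0(z)=\sigma^{-2}z\,e^{-z^2/(2\sigma^2)}$ and $\pi_\delta(z)=\sigma^{-2}\delta^{-2}z\,e^{-z^2/(2\sigma^2\delta^2)}$ for $z\ge0$ (the densities of $\beta$ and $\delta\beta$ for $\beta\sim\mathrm{Rayleigh}(\sigma)$). Define $$G(\delta,\lambda)=\lambda p-\int_0^\infty\big(\lambda\pi_0(z)-\pi_\delta(z)\big)_+\,dz,\qquad (s)_+=\max\{0,s\}.$$ Then $\lambda\mapsto G(\delta,\lambda)$ attains its maximum over $\lambda\ge0$ at $\lambda_\delta=\delta^{-2}p^{(1-\delta^2)/\delta^2}$, and $$\max_{\lambda\ge0}G(\delta,\lambda)=p^{\delta^{-2}}.$$ Consequently, for $\gamma_1\in(0,1)$, $\min_{\delta\in[\gamma_1,1)}\max_{\lambda\ge0}G(\delta,\lambda)=p^{\gamma_1^{-2}}$ (as an infimum over $[\gamma_1,1)$), and $p^{\gamma_1^{-2}}>\tfrac12$ if and only if $\gamma_1>\sqrt{\log p/\log\tfrac12}$.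
   Context: A random variable $\zeta$ has the Rayleigh distribution with scale $\sigma>0$, written $\zeta\sim\mathrm{Rayleigh}(\sigma)$, if it has density $p_\zeta(z)=\sigma^{-2}z\,e^{-z^2/(2\sigma^2)}$ for $z\ge 0$ (and $0$ for $z<0$). *)

(* Defs.v *)
From mathcomp Require Import all_boot all_order all_algebra.
From mathcomp Require Import all_classical all_reals all_analysis.
Set Implicit Arguments. Unset Strict Implicit. Unset Printing Implicit Defensive.
Import Order.TTheory GRing.Theory Num.Theory.
Local Open Scope classical_set_scope.
Local Open Scope ring_scope.

Definition pi0 {R : realType} (sigma z : R) : R :=
  sigma ^- 2 * z * expR (- (z ^+ 2) / (2 * sigma ^+ 2)).

Definition pidelta {R : realType} (sigma delta z : R) : R :=
  sigma ^- 2 * delta ^- 2 * z * expR (- (z ^+ 2) / (2 * sigma ^+ 2 * delta ^+ 2)).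

Definition Gfun {R : realType} (sigma p delta lambda : R) : R :=
  lambda * p -
  Rintegral (@lebesgue_measure R) `[0, +oo[
    (fun z => Num.max 0 (lambda * pi0 sigma z - pidelta sigma delta z)).

Definition maxG {R : realType} (sigma p delta : R) : R :=
  sup [set Gfun sigma p delta l | l in `[0, +oo[].

(* Main.v *)
Require Import Defs.
From mathcomp Require Import all_boot all_order all_algebra.
From mathcomp Require Import all_classical all_reals all_analysis.
From mathcomp Require Import ring lra.
From mathcomp Require Import measurable_realfun.
Import Order.TTheory GRing.Theory Num.Theory.
Local Open Scope classical_set_scope.
Local Open Scope ring_scope.

Lemma F_der (R : realType) (k c : R) (x : R) : 0 < k ->
  is_derive x 1 (fun x : R => - (c * expR (- (x ^+ 2) / (2 * k))))
   (c * k^-1 * x * expR (- (x ^+ 2) / (2 * k))).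
Proof.
move=> k0; apply: is_derive_eq.
rewrite scaler0 add0r /GRing.scale /=.
field. by rewrite gt_eqF.
Qed.

Lemma F_cont (R : realType) (k c : R) :
  continuous (fun x : R^o => (- (c * expR (- (x ^+ 2) / (2 * k))) : R^o)).
Proof.
move=> x; apply: differentiable_continuous; apply/derivable1_diffP; exact: ex_derive.
Qed.

Lemma f_cont (R : realType) (k c : R) :
  continuous (fun x : R^o => (c * k^-1 * x * expR (- (x ^+ 2) / (2 * k)) : R^o)).
Proof.
move=> x; apply: differentiable_continuous; apply/derivable1_diffP; exact: ex_derive.
Qed.

Lemma tail (R : realType) (k c a : R) : 0 < k -> 0 <= c -> 0 <= a ->
 (\int[lebesgue_measure]_(x in `[a, +oo[) (c * k^-1 * x * expR (- (x ^+ 2) / (2 * k)))%:E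
   = (c * expR (- (a ^+ 2) / (2 * k)))%:E)%E.
Proof.
move=> k0 c0 a0.
rewrite (@ge0_continuous_FTC2y _ _ (fun x : R => - (c * expR (- (x ^+ 2) / (2 * k)))) _ 0).
- by rewrite sub0e EFinN oppeK.
- move=> x ax /=; apply: mulr_ge0; last exact: expR_ge0; apply: mulr_ge0; last exact: le_trans ax.
  by apply: mulr_ge0 => //; rewrite invr_ge0 ltW.
- exact: continuous_subspaceT (@f_cont R k c).
- rewrite -oppr0 -(mulr0 c); apply: cvgN; apply: cvgMr.
  have -> : (fun x : R => expR (- (x ^+ 2) / (2 * k))) =
     (fun z => expR (- z)) \o (fun x => x ^+ 2 * (2 * k)^-1).
    by apply/funext => x /=; rewrite mulNr.
  apply: (@cvg_comp _ _ _ _ _ _ (pinfty_nbhs R)); last exact: cvgr_expR.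
  apply: gt0_cvgMly; last exact: cvgr_expr2.
  by rewrite invr_gt0 mulr_gt0.
- move=> x _; have h := @F_der R k c x k0; exact: ex_derive.
- exact: (cvg_at_right_filter (@F_cont R k c a)).
- move=> x _; rewrite derive1E /=. have h := @F_der R k c x k0. by rewrite derive_val.
Qed.

Lemma pi0E (R : realType) (sigma z : R) :
  pi0 sigma z = 1 * (sigma ^+ 2)^-1 * z * expR (- (z ^+ 2) / (2 * sigma ^+ 2)).
Proof. by rewrite /pi0 mul1r. Qed.

Lemma pideltaE (R : realType) (sigma delta z : R) :
  pidelta sigma delta z = 1 * (sigma ^+ 2 * delta ^+ 2)^-1 * z *
     expR (- (z ^+ 2) / (2 * (sigma ^+ 2 * delta ^+ 2))).
Proof. by rewrite /pidelta mul1r (mulrA 2) -invfM. Qed.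

Lemma pi0_tail (R : realType) (sigma l a : R) : 0 < sigma -> 0 <= l -> 0 <= a ->
  (\int[lebesgue_measure]_(x in `[a, +oo[) (l * pi0 sigma x)%:E
    = (l * expR (- (a ^+ 2) / (2 * sigma ^+ 2)))%:E)%E.
Proof.
move=> s0 l0 a0.
have E x : l * pi0 sigma x = l * (sigma ^+ 2)^-1 * x * expR (- (x ^+ 2) / (2 * sigma ^+ 2)).
  by rewrite /pi0; ring.
under eq_integral => x _ do rewrite E.
by apply: tail => //; rewrite exprn_gt0.
Qed.

Lemma pidelta_tail (R : realType) (sigma delta a : R) : 0 < sigma -> 0 < delta -> 0 <= a ->
  (\int[lebesgue_measure]_(x in `[a, +oo[) (pidelta sigma delta x)%:E
    = (expR (- (a ^+ 2) / (2 * (sigma ^+ 2 * delta ^+ 2))))%:E)%E.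
Proof.
move=> s0 d0 a0.
under eq_integral => x _ do rewrite pideltaE.
rewrite tail ?mul1r //; by rewrite mulr_gt0 // exprn_gt0.
Qed.

Lemma pi0_cont (R : realType) (sigma : R) : continuous (fun x : R^o => (pi0 sigma x : R^o)).
Proof.
move=> x; rewrite /pi0; apply: differentiable_continuous; apply/derivable1_diffP; exact: ex_derive.
Qed.

Lemma pidelta_cont (R : realType) (sigma delta : R) :
  continuous (fun x : R^o => (pidelta sigma delta x : R^o)).
Proof.
move=> x; rewrite /pidelta; apply: differentiable_continuous; apply/derivable1_diffP; exact: ex_derive.
Qed.

Lemma mpi0 (R : realType) (sigma : R) : measurable_fun setT (pi0 sigma).
Proof. apply: measurable_realfun.continuous_measurable_fun => x.
rewrite /pi0; apply: differentiable_continuous; apply/derivable1_diffP; exact: ex_derive. Qed.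

Lemma mpid (R : realType) (sigma delta : R) : measurable_fun setT (pidelta sigma delta).
Proof. apply: measurable_realfun.continuous_measurable_fun => x.
rewrite /pidelta; apply: differentiable_continuous; apply/derivable1_diffP; exact: ex_derive. Qed.

Lemma mg (R : realType) (sigma delta l : R) :
  measurable_fun setT (fun z : R => Num.max 0 (l * pi0 sigma z - pidelta sigma delta z)).
Proof.
apply: (@measurable_realfun.measurable_maxr _ _ _ _ (cst 0)
  (fun z => l * pi0 sigma z - pidelta sigma delta z)).
  exact: measurable_cst.
apply: measurable_realfun.measurable_funB; last exact: mpid.
apply: (@measurable_realfun.measurable_funM _ _ _ _ (cst l)); first exact: measurable_cst.
exact: mpi0.
Qed.

Section Key.
Variables (R : realType) (sigma p delta : R).
Hypotheses (s0 : 0 < sigma) (p0 : 0 < p) (p1 : p < 1) (d0 : 0 < delta) (d1 : delta < 1).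
Let mu := @lebesgue_measure R.
Let g (l z : R) : R := Num.max 0 (l * pi0 sigma z - pidelta sigma delta z).
Let L := ln p.
Let L0 : L < 0. Proof. by apply: ln_lt0; rewrite p0 p1. Qed.
Let zs := Num.sqrt (- (2 * sigma ^+ 2 * L)).
Let zs0 : 0 <= zs. Proof. exact: sqrtr_ge0. Qed.
Let zs2 : zs ^+ 2 = - (2 * sigma ^+ 2 * L).
Proof.
have h : 0 < 2 * sigma ^+ 2 by rewrite mulr_gt0 // exprn_gt0.
rewrite sqr_sqrtr //; have := L0; nra.
Qed.
Let q := p `^ (delta ^- 2).
Let eP : expR (- (zs ^+ 2) / (2 * sigma ^+ 2)) = p.
Proof.
rewrite zs2 (_ : - - _ / _ = L) ?lnK //.
field; by rewrite gt_eqF // exprn_gt0.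
Qed.
Let eQ : expR (- (zs ^+ 2) / (2 * (sigma ^+ 2 * delta ^+ 2))) = q.
Proof.
rewrite /q /powR gt_eqF // zs2; congr expR.
rewrite /L; field; by rewrite !gt_eqF // exprn_gt0.
Qed.

Let pi0_ge0 z : 0 <= z -> 0 <= pi0 sigma z.
Proof. by move=> z0; rewrite /pi0 !mulr_ge0 // ?expR_ge0 // invr_ge0 exprn_ge0 // ltW. Qed.
Let pid_ge0 z : 0 <= z -> 0 <= pidelta sigma delta z.
Proof. by move=> z0; rewrite /pidelta !mulr_ge0 // ?expR_ge0 // invr_ge0 exprn_ge0 // ltW. Qed.

Let mgE l : measurable_fun setT (EFin \o g l).
Proof. apply/measurable_EFinP; exact: mg. Qed.
Let mpi0E l : measurable_fun setT (EFin \o (fun z : R => l * pi0 sigma z)).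
Proof.
apply/measurable_EFinP.
apply: (@measurable_realfun.measurable_funM _ _ _ _ (cst l)); first exact: measurable_cst.
exact: mpi0.
Qed.
Let mpidE : measurable_fun setT (EFin \o pidelta sigma delta).
Proof. apply/measurable_EFinP; exact: mpid. Qed.

Lemma Ifin (l : R) : 0 <= l ->
  (\int[mu]_(x in `[0%R, +oo[) (g l x)%:E)%E \is a fin_num /\
  (0 <= \int[mu]_(x in `[0%R, +oo[) (g l x)%:E)%E.
Proof.
move=> l0.
have ge0 : (0 <= \int[mu]_(x in `[0%R, +oo[) (g l x)%:E)%E.
  by apply: integral_ge0 => x _; rewrite lee_fin /g le_max lexx.
split => //; rewrite ge0_fin_numE //.
apply: (@le_lt_trans _ _ (l%:E)); last exact: ltry.
have -> : l%:E = (\int[mu]_(x in `[0%R, +oo[) (l * pi0 sigma x)%:E)%E.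
  by rewrite pi0_tail // expr0n /= oppr0 mul0r expR0 mulr1.
apply: ge0_le_integral => //.
- by move=> x _; rewrite lee_fin /g le_max lexx.
- exact: measurable_funS (mgE l).
- exact: measurable_funS (mpi0E l).
- move=> x; rewrite /= in_itv /= andbT => x0.
  rewrite lee_fin /g ge_max mulr_ge0 ?pi0_ge0 //=.
  by rewrite lerBlDr lerDl pid_ge0.
Qed.

Let sub0 : `[zs, +oo[ `<=` `[0%R, +oo[.
Proof. by move=> x /=; rewrite !in_itv /= !andbT => /(le_trans zs0). Qed.

Let gge0 (l : R) (D : set R) : forall x, D x -> (0 <= (g l x)%:E)%E.
Proof. by move=> x _; rewrite lee_fin /g le_max lexx. Qed.

Let pidE (l : R) : 0 <= l -> (\int[mu]_(x in `[zs, +oo[) (g l x)%:E + q%:E =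
   \int[mu]_(x in `[zs, +oo[) ((g l x)%:E + (pidelta sigma delta x)%:E))%E.
Proof.
move=> l0.
rewrite ge0_integralD //.
- by rewrite pidelta_tail // eQ.
- exact: gge0.
- apply: measurable_funS (mgE l) => //.
- by move=> x /=; rewrite in_itv /= andbT => /(le_trans zs0) x0; rewrite lee_fin pid_ge0.
- exact: measurable_funS mpidE.
Qed.

Lemma Gle (l : R) : 0 <= l -> Gfun sigma p delta l <= q.
Proof.
move=> l0; have [fin ge0] := Ifin l l0.
rewrite /Gfun; change (Rintegral _ _ _) with (fine (\int[mu]_(x in `[0%R, +oo[) (g l x)%:E)).
set I := (\int[mu]_(x in `[0%R, +oo[) (g l x)%:E)%E in fin ge0 *.
set J := (\int[mu]_(x in `[zs, +oo[) (g l x)%:E)%E.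
have JI : (J <= I)%E.
  apply: ge0_subset_integral => //.
  - exact: measurable_funS (mgE l).
  - exact: gge0.
have J0 : (0 <= J)%E by apply: integral_ge0 => x _; rewrite lee_fin /g le_max lexx.
have Jfin : J \is a fin_num.
  rewrite ge0_fin_numE //; apply: le_lt_trans JI _; rewrite -ge0_fin_numE //.
have HJ : ((l * p)%:E <= J + q%:E)%E.
  rewrite pidE // -eP -pi0_tail //.
  apply: ge0_le_integral => //.
  - by move=> x /=; rewrite in_itv /= andbT => /(le_trans zs0) x0; rewrite lee_fin mulr_ge0 ?pi0_ge0.
  - exact: measurable_funS (mpi0E l).
  - apply: emeasurable_funD; [exact: measurable_funS (mgE l)|exact: measurable_funS mpidE].
  - move=> x _; rewrite -EFinD lee_fin /g -lerBlDr le_max lexx orbT //.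
move: HJ JI; rewrite -(fineK Jfin) -(fineK fin) -EFinD !lee_fin => HJ JI.
lra.
Qed.

Let e := (1 - delta ^+ 2) / delta ^+ 2.
Let lam := delta ^- 2 * p `^ e.
Let e0 : 0 < e.
Proof. rewrite /e divr_gt0 ?exprn_gt0 // subr_gt0 expr_lt1 //; exact: ltW. Qed.
Lemma lam0 : 0 <= lam.
Proof. by rewrite /lam mulr_ge0 ?powR_ge0 // invr_ge0 exprn_ge0 // ltW. Qed.
Let lamE : lam = delta ^- 2 * expR (e * L).
Proof. by rewrite /lam /powR gt_eqF. Qed.
Let key z : lam * pi0 sigma z - pidelta sigma delta z =
  sigma ^- 2 * delta ^- 2 * z * (expR (e * L + - (z ^+ 2) / (2 * sigma ^+ 2))
     - expR (- (z ^+ 2) / (2 * sigma ^+ 2 * delta ^+ 2))).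
Proof. by rewrite lamE /pi0 /pidelta expRD; ring. Qed.
Let AB z : e * L + - (z ^+ 2) / (2 * sigma ^+ 2) - (- (z ^+ 2) / (2 * sigma ^+ 2 * delta ^+ 2))
  = e * (L + z ^+ 2 / (2 * sigma ^+ 2)).
Proof. rewrite /e; field; by rewrite !gt_eqF // exprn_gt0. Qed.
Let zz : zs ^+ 2 / (2 * sigma ^+ 2) = - L.
Proof. rewrite zs2; field; by rewrite !gt_eqF // exprn_gt0. Qed.
Let fac_ge0 z : 0 <= z -> 0 <= sigma ^- 2 * delta ^- 2 * z.
Proof. by move=> z0; rewrite !mulr_ge0 // invr_ge0 exprn_ge0 // ltW. Qed.
Let s2 : 0 < 2 * sigma ^+ 2.
Proof. by rewrite mulr_gt0 // exprn_gt0. Qed.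

Let P1 z : 0 <= z -> z <= zs -> g lam z = 0.
Proof.
move=> z0 zzs; rewrite /g max_l // key; apply: mulr_ge0_le0; first exact: fac_ge0.
rewrite subr_le0 ler_expR -subr_le0 AB; apply: mulr_ge0_le0; first exact: ltW.
have h1 : z ^+ 2 <= zs ^+ 2 by rewrite ler_sqr // ?nnegrE.
have h2 : z ^+ 2 / (2 * sigma ^+ 2) <= zs ^+ 2 / (2 * sigma ^+ 2).
  by rewrite ler_pM2r // invr_gt0.
move: h2; rewrite zz; lra.
Qed.

Let P2 z : zs <= z -> g lam z = lam * pi0 sigma z - pidelta sigma delta z.
Proof.
move=> zzs; have z0 : 0 <= z := le_trans zs0 zzs.
rewrite /g max_r // key; apply: mulr_ge0; first exact: fac_ge0.
rewrite subr_ge0 ler_expR -subr_ge0 AB; apply: mulr_ge0; first exact: ltW.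
have h1 : zs ^+ 2 <= z ^+ 2 by rewrite ler_sqr // ?nnegrE.
have h2 : zs ^+ 2 / (2 * sigma ^+ 2) <= z ^+ 2 / (2 * sigma ^+ 2).
  by rewrite ler_pM2r // invr_gt0.
move: h2; rewrite zz; lra.
Qed.

Lemma Glam : Gfun sigma p delta lam = q.
Proof.
have [fin ge0] := Ifin lam lam0.
rewrite /Gfun; change (Rintegral _ _ _) with (fine (\int[mu]_(x in `[0%R, +oo[) (g lam x)%:E)).
rewrite (@itv_bndbnd_setU _ _ (BLeft 0%R) (BLeft zs) (BInfty _ false)) ?bnd_simp //.
rewrite ge0_integral_setU //; last first.
- apply/disj_set2P; apply/seteqP; split => x //=; rewrite !in_itv /= andbT.
  by move=> [/andP[_ h1] h2]; move: (lt_le_trans h1 h2); rewrite ltxx.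
- exact: gge0.
- exact: measurable_funS (mgE lam).
rewrite integral0_eq ?add0e; last first.
  by move=> x /=; rewrite in_itv /= => /andP[x0 xz]; rewrite P1 // ltW.
set J := (\int[mu]_(x in `[zs, +oo[) (g lam x)%:E)%E.
have HJ : (J + q%:E = (lam * p)%:E)%E.
  rewrite pidE ?lam0 // -eP -pi0_tail ?lam0 //.
  apply: eq_integral => x; rewrite inE /= in_itv /= andbT => xz.
  by rewrite -EFinD P2 // subrK.
have J0 : (0 <= J)%E by apply: integral_ge0 => x _; rewrite lee_fin /g le_max lexx.
have Jfin : J \is a fin_num.
  rewrite ge0_fin_numE //; apply: (@le_lt_trans _ _ (J + q%:E)%E).
    by rewrite leeDl // lee_fin powR_ge0.
  by rewrite HJ ltry.
have HJ' : fine J + q = lam * p by apply: EFin_inj; rewrite EFinD fineK.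
rewrite /=; lra.
Qed.
End Key.

Lemma maxGE (R : realType) (sigma p delta : R) : 0 < sigma -> 0 < p < 1 -> 0 < delta < 1 ->
  maxG sigma p delta = p `^ (delta ^- 2).
Proof.
move=> s0 /andP[p0 p1] /andP[d0 d1].
set lam := delta ^- 2 * p `^ ((1 - delta ^+ 2) / delta ^+ 2).
have l0 : 0 <= lam := @lam0 R p delta d0.
have ub : ubound [set Gfun sigma p delta l | l in `[0, +oo[] (p `^ (delta ^- 2)).
  move=> _ [l hl <-]; apply: (@Gle R sigma p delta) => //; move: hl; by rewrite /= in_itv /= andbT.
have inE' : [set Gfun sigma p delta l | l in `[0, +oo[] (Gfun sigma p delta lam).
  by exists lam => //=; rewrite in_itv /= andbT.
apply/eqP; rewrite eq_le; apply/andP; split.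
- apply: ge_sup => //; by exists (Gfun sigma p delta lam).
- rewrite -{1}(@Glam R sigma p delta s0 p0 p1 d0 d1); apply: ub_le_sup => //.
  by exists (p `^ (delta ^- 2)).
Qed.

Theorem mainTheorem6 (R : realType) (sigma p : R) :
  0 < sigma -> 0 < p < 1 ->
  (forall delta : R, 0 < delta < 1 ->
     let lam := delta ^- 2 * p `^ ((1 - delta ^+ 2) / delta ^+ 2) in
     0 <= lam /\
     (forall l : R, 0 <= l -> Gfun sigma p delta l <= Gfun sigma p delta lam) /\
     Gfun sigma p delta lam = p `^ (delta ^- 2) /\
     maxG sigma p delta = p `^ (delta ^- 2)) /\
  (forall gamma1 : R, 0 < gamma1 < 1 ->
     inf [set maxG sigma p d | d in `[gamma1, 1[] = p `^ (gamma1 ^- 2) /\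
     (1 / 2 < p `^ (gamma1 ^- 2) <-> Num.sqrt (ln p / ln (1 / 2)) < gamma1)).
Proof.
move=> s0 hp; have /andP[p0 p1] := hp.
split.
  move=> delta hd; have /andP[d0 d1] := hd.
  move=> lam; split; first exact: lam0.
  split; first by move=> l l0; rewrite (@Glam R sigma p delta s0 p0 p1 d0 d1); exact: (@Gle R sigma p delta).
  split; first exact: (@Glam R sigma p delta).
  exact: maxGE.
move=> g hg; have /andP[g0 g1] := hg.
set L := ln p.
have L0 : L < 0 by apply: ln_lt0; rewrite p0 p1.
have pw x : p `^ x = expR (x * L) by rewrite /powR gt_eqF.
split.
  have lb : lbound [set maxG sigma p d | d in `[g, 1[] (p `^ (g ^- 2)).
    move=> _ [d hd <-]; move: hd; rewrite /= in_itv /= => /andP[gd d1].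
    have d0 : 0 < d := lt_le_trans g0 gd.
    rewrite maxGE //; last by rewrite d0 d1.
    rewrite !pw ler_expR.
    have : d ^- 2 <= g ^- 2.
      rewrite lef_pV2 ?posrE ?exprn_gt0 //.
      by rewrite ler_sqr // nnegrE ltW.
    nra.
  have inE' : [set maxG sigma p d | d in `[g, 1[] (p `^ (g ^- 2)).
    by exists g; [rewrite /= in_itv /= lexx | rewrite maxGE // ?hg].
  apply/eqP; rewrite eq_le; apply/andP; split.
  - apply: ge_inf => //; by exists (p `^ (g ^- 2)).
  - apply: lb_le_inf => //; by exists (p `^ (g ^- 2)).
set M := ln (1 / 2 : R).
have M0 : M < 0 by apply: ln_lt0; rewrite divr_gt0 // ltr_pdivrMr //; lra.
have b0 : 0 < g ^+ 2 by rewrite exprn_gt0.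
have -> : 1 / 2 = expR M by rewrite /M lnK // posrE; lra.
rewrite pw ltr_expR.
have -> : (Num.sqrt (L / M) < g) = (L / M < g ^+ 2).
  by rewrite -[in RHS]ltr_sqrt // sqrtr_sqr ger0_norm // ltW.
rewrite ltr_ndivrMr // (_ : g ^- 2 * L = L / g ^+ 2) ?ltr_pdivlMr //; last by rewrite mulrC.
by rewrite mulrC.
Qed.
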